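(* Fix $r\ge 2$ and integers $k_0,\dots,k_{r-2}\ge 3$. Then there exists a constant $C_{k_0,\dots,k_{r-2}}>0$ such that for all sufficiently large integers $u$, \[ S(r;k_0,\dots,k_{r-2},u) \le C_{k_0,\dots,k_{r-2}}\,\frac{u^{\sum_{i=0}^{r-2}(k_i-2)+1}}{(\log u)^{\sum_{i=0}^{r-2}(k_i-2)}}-1. \] In particular, for fixed integers $3\le s\le t$ there exists a constant $C_{s,t}>0$ such that for all sufficiently large $u$, \[ S(3;s,t,u)\le C_{s,t}\,\frac{u^{s+t-3}}{(\log u)^{s+t-4}}-1. \]
   Context: For an integer $k\ge 3$, let $\mathcal{L}(k)$ denote the equation $x_1+x_2+\cdots+x_{k-1}=x_k$ in positive integer variables (the $x_i$ need not be distinct). For $N\ge1$, write $[1,N]=\{1,2,\dots,N\}$. For integers $r\ge1$ and $k_0,\dots,k_{r-1}\ge 3$, the generalized Schur number $S(r;k_0,\dots,k_{r-1})$ is the least positive integer $N$ such that for every coloring $\Delta:[1,N]\to\{0,1,\dots,r-1\}$ there exist some $i\in\{0,\dots,r-1\}$ and positive integers $x_1,\dots,x_{k_i}\in[1,N]$ satisfying $\mathcal{L}(k_i)$ with $\Delta(x_1)=\cdots=\Delta(x_{k_i})=i$. *)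

(* Defs.v *)
From Stdlib Require Import Reals.
From mathcomp Require Import all_boot.
Set Implicit Arguments. Unset Strict Implicit. Unset Printing Implicit Defensive.

(* A list ks = [:: k_0; ...; k_{r-1}] of parameters; r = size ks.
   schur_prop ks N : every r-coloring of [1,N] (given as a function
   nat -> 'I_r, only its values on [1,N] matter) admits a colour i and
   x_1..x_{k_i} (here indexed x 0 .. x (k_i - 1)) in [1,N], all of colour i,
   with x_1 + ... + x_{k_i - 1} = x_{k_i}. *)
Definition schur_prop (ks : seq nat) (N : nat) : Prop :=
  forall Delta : nat -> 'I_(size ks),
    exists (i : 'I_(size ks)) (x : nat -> nat),
      (forall j, j < nth 0 ks i -> (1 <= x j <= N) /\ Delta (x j) = i) /\
      \sum_(j < (nth 0 ks i).-1) x j = x (nth 0 ks i).-1.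

Definition is_schur (ks : seq nat) (N : nat) : Prop :=
  0 < N /\ schur_prop ks N /\ (forall M, 0 < M -> M < N -> ~ schur_prop ks M).

(* Main.v *)
Require Import Defs.
From Stdlib Require Import Reals.
From mathcomp Require Import all_boot.
From Stdlib Require Import Classical Lra.
From mathcomp Require Import zify.
From Stdlib Require Import Lia.
Set Implicit Arguments. Unset Strict Implicit. Unset Printing Implicit Defensive.


Definition clique n (D : nat -> 'I_n) (X : seq nat) (i : 'I_n) (m : nat) :=
  exists y : nat -> nat, (forall l, l <= m -> y l \in X) /\
    (forall l l', l < l' -> l' <= m -> y l < y l' /\ D (y l' - y l) = i).

Lemma sum_classes n (f : nat -> 'I_n) (s : seq nat) :
  \sum_(i < n) size [seq x <- s | f x == i] = size s.
Proof.
elim: s => [|x s IH] /=; first by rewrite big1.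
rewrite -[RHS]add1n -IH.
have -> : \sum_(i < n) size (if f x == i then x :: [seq x0 <- s | f x0 == i] else [seq x0 <- s | f x0 == i])
   = \sum_(i < n) ((f x == i) + size [seq x0 <- s | f x0 == i]).
  by apply: eq_bigr => i _; case: (f x == i).
rewrite big_split /=; congr (_ + _).
rewrite (bigD1 (f x)) //= eqxx big1 // => i /negbTE; rewrite eq_sym => ->. done.
Qed.

Lemma ramsey n s : exists G, 0 < G /\ forall (D : nat -> 'I_n) (m : 'I_n -> nat),
  \sum_i m i <= s -> forall X, sorted ltn X -> G <= size X -> exists i, clique D X i (m i).
Proof.
elim: s => [|s [G' [G'pos IH]]].
  exists 1; split => // D m hm [|x X] //= _ _.
  exists (D x); exists (fun _ => x); split.
    by move=> l _; rewrite inE eqxx.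
  move=> l l' ll' l'0.
  have : \sum_i m i == 0 by rewrite -leqn0.
  by rewrite sum_nat_eq0 => /forallP /(_ (D x)) /= /eqP; lia.
exists (n * G' + 2); split; first lia.
move=> D m hm [|p X] sX hsz /=; first by move: hsz => /=; lia.
have allp : all (ltn p) X.
  apply: order_path_min sX. move=> ? ? ?; exact: ltn_trans.
have sX' : sorted ltn X by apply: path_sorted sX.
pose cl i := [seq x <- X | D (x - p) == i].
have [i hi] : exists i, G' <= size (cl i).
  apply: NNPP => hn.
  have h1 : forall i, size (cl i) <= G'.-1.
    move=> i; move/negP: (not_ex_all_not _ _ hn i); rewrite -ltnNge; set z := size _; lia.
  have := sum_classes (fun x => D (x - p)) X.
  have : \sum_(i < n) size (cl i) <= \sum_(i < n) G'.-1 by apply: leq_sum => i _; exact: h1.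
  rewrite sum_nat_const card_ord /cl => h2 h3.
  rewrite h3 in h2; move: hsz; rewrite /=; nia.
case: (posnP (m i)) => mi0.
  exists i; exists (fun _ => p); split; first by move=> l _; rewrite inE eqxx.
  by move=> l l' ll' l'0; lia.
pose m' := fun j => if j == i then (m i).-1 else m j.
have hm' : \sum_j m' j <= s.
  move: hm; rewrite (bigD1 i) //= [X in X <= s](bigD1 i) //= /m' eqxx.
  have -> : \sum_(j < n | j != i) (if j == i then (m i).-1 else m j) = \sum_(j < n | j != i) m j.
    by apply: eq_bigr => j /negbTE ->.
  set S := \sum_(j < n | j != i) m j; lia.
have scl : sorted ltn (cl i) by apply: sorted_filter => //; exact: ltn_trans.
have [j [y [yin ycl]]] := IH D m' hm' (cl i) scl hi.
have incl : forall z, z \in cl i -> z \in X /\ p < z /\ D (z - p) = i.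
  move=> z; rewrite mem_filter => /andP [/eqP hd hz]; split => //; split => //.
  by move/allP: allp => /(_ z hz).
case: (eqVneq j i) => [ji|jni].
- subst j; exists i; exists (fun l => if l is l1.+1 then y l1 else p); split.
    case=> [|l] hl; first by rewrite inE eqxx.
    rewrite inE; apply/orP; right; apply: (proj1 (incl _ (yin l _))).
    rewrite /m' eqxx in hl *; lia.
  move=> [|l] [|l'] //= hll hl'.
    have hy := incl _ (yin l' _).
    rewrite /m' eqxx in hy; have [_ [h1 h2]] := hy ltac:(lia); by [].
  have := ycl l l' ltac:(lia); rewrite /m' eqxx; apply; lia.
- exists j; exists y; split.
    move=> l hl; rewrite inE; apply/orP; right; apply: (proj1 (incl _ (yin l _))).
    by rewrite /m' (negbTE jni).
  by move=> l l' h1 h2; apply: ycl => //; rewrite /m' (negbTE jni).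
Qed.


Lemma telescope (y : nat -> nat) K :
  (forall j j', j <= j' -> j' <= K -> y j <= y j') ->
  \sum_(j < K) (y j.+1 - y j) = y K - y 0.
Proof.
elim: K => [|K IH] h; first by rewrite big_ord0 subnn.
rewrite big_ord_recr /= IH; last by move=> j j' h1 h2; apply: h => //; lia.
have := h 0 K ltac:(lia) ltac:(lia); have := h K K.+1 ltac:(lia) ltac:(lia); lia.
Qed.

Lemma schur_exists (ks : seq nat) :
  (forall i, i < size ks -> 2 <= nth 0 ks i) -> exists T, 1 <= T /\ schur_prop ks T.
Proof.
move=> hk.
have [G [Gpos HG]] := ramsey (size ks) (\sum_(i < size ks) (nth 0 ks i).-1).
exists G; split => // D.
have [i [y [yin ycl]]] := HG D (fun i => (nth 0 ks i).-1) (leqnn _) (iota 0 G)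
   (iota_ltn_sorted 0 G) ltac:(by rewrite size_iota).
have k2 := hk i (ltn_ord i).
set k := nth 0 ks i in k2 yin ycl *.
have ylt : forall l, l <= k.-1 -> y l < G.
  by move=> l hl; have := yin l hl; rewrite mem_iota; lia.
exists i; exists (fun j => if j < k.-1 then y j.+1 - y j else y k.-1 - y 0); split.
  move=> j hj; case: ifP => hjk.
    have [h1 h2] := ycl j j.+1 ltac:(lia) ltac:(lia); have := ylt j.+1 ltac:(lia); split => //; lia.
  have [h1 h2] := ycl 0 k.-1 ltac:(lia) ltac:(lia); have := ylt k.-1 ltac:(lia); split => //; lia.
rewrite ltnn.
rewrite (eq_bigr (fun j : 'I_k.-1 => y j.+1 - y j)); last by move=> j _; rewrite ltn_ord.
apply: telescope => j j' h1 h2.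
case: (ltngtP j j') => [hlt|hlt|->//]; last lia.
by have [] := ycl j j' hlt h2 => /ltnW.
Qed.


Definition sol (ks : seq nat) N (D : nat -> 'I_(size ks)) :=
  exists (i : 'I_(size ks)) (x : nat -> nat),
      (forall j, j < nth 0 ks i -> (1 <= x j <= N) /\ D (x j) = i) /\
      \sum_(j < (nth 0 ks i).-1) x j = x (nth 0 ks i).-1.

Lemma size_rc (ks : seq nat) u : size ks < size (rcons ks u).
Proof. by rewrite size_rcons. Qed.

Definition lastc (ks : seq nat) u : 'I_(size (rcons ks u)) := Ordinal (size_rc ks u).

Lemma nth_lastc ks u : nth 0 (rcons ks u) (lastc ks u) = u.
Proof. by rewrite nth_rcons /= ltnn eqxx. Qed.

Lemma hit (ks : seq nat) u T N (D : nat -> 'I_(size (rcons ks u))) c :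
  0 < size ks -> schur_prop ks T -> 1 <= c -> c * T <= N ->
  (exists j, 1 <= j <= T /\ D (c * j) = lastc ks u) \/ sol N D.
Proof.
move=> hpos hT hc hcT.
case: (classic (exists j, 1 <= j <= T /\ D (c * j) = lastc ks u)) => hex; [by left|right].
pose i0 : 'I_(size ks) := Ordinal hpos.
pose D' := fun j => insubd i0 (val (D (c * j))) : 'I_(size ks).
have [i [x [hx hsum]]] := hT D'.
have hw : size ks <= size (rcons ks u) by rewrite size_rcons.
have hnth : nth 0 (rcons ks u) (widen_ord hw i) = nth 0 ks i by rewrite nth_rcons /= ltn_ord.
exists (widen_ord hw i); exists (fun j => c * x j); rewrite hnth; split.
  move=> j hj; have [h1 h2] := hx j hj; split; first by nia.
  have hlt : val (D (c * x j)) < size ks.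
    have : (D (c * x j) : nat) < (size ks).+1.
      by move: (D (c * x j)); rewrite size_rcons => o; exact: ltn_ord.
    rewrite ltnS leq_eqVlt => /orP [/eqP he|//].
    by exfalso; apply: hex; exists (x j); split => //; apply: val_inj.
  apply: val_inj => /=; rewrite -h2 /D' insubdK //.
by rewrite -big_distrr /= hsum.
Qed.


Lemma sum3 A B K v1 v2 v3 : A <= B ->
  \sum_(l < K) (if l < A then v1 else if l < B then v2 else v3) =
  minn A K * v1 + (minn B K - minn A K) * v2 + (K - minn B K) * v3.
Proof.
move=> hAB; elim: K => [|K IH]; first by rewrite big_ord0 !minn0.
rewrite big_ord_recr /= IH.
case: (ltnP K A) => hKA; case: (ltnP K B) => hKB; try lia.
- rewrite (_ : minn A K.+1 = A); last lia.
  rewrite (_ : minn B K.+1 = K.+1); last lia.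
  rewrite subnn (_ : K.+1 - A = (K - A).+1); last lia.
  rewrite mulSn; lia.
- rewrite (_ : minn A K.+1 = A); last lia.
  rewrite (_ : minn B K.+1 = B); last lia.
  rewrite (_ : K.+1 - B = (K - B).+1); last lia.
  rewrite mulSn; lia.
Qed.


Definition Fm T := T * (T + 2) * T.

Lemma m3 a b c a' b' c' : a <= a' -> b <= b' -> c <= c' -> a * b * c <= a' * b' * c'.
Proof. by move=> h1 h2 h3; apply: leq_mul => //; apply: leq_mul. Qed.

Lemma ar_e T j1 : 1 <= j1 <= T -> T + 1 <= (T + 2) * j1 - 1 /\
  (T + 2) * j1 - 1 + 1 = (T + 2) * j1 /\ (T + 2) * j1 - 1 <= (T + 2) * T.
Proof. move=> /andP [h1 h2]; nia. Qed.

Lemma ar_f T e j0 : 1 <= j0 <= T -> T + 1 <= e -> e <= (T + 2) * T ->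
  T <= e * j0 - 1 /\ e * j0 - 1 + 1 = e * j0 /\ e * j0 - 1 <= Fm T.
Proof.
move=> /andP [h1 h2] h3 h4; split; first nia. split; first nia.
rewrite /Fm; have := leq_mul h4 h2; lia.
Qed.



Lemma ar_q1 f q rho : f * f <= q * f + rho -> rho < f -> f <= q.
Proof.
move=> h1 h2; rewrite leqNgt; apply/negP => hq.
have : q * f <= (f - 1) * f by apply: leq_mul => //; lia.
have : (f - 1) * f + f = f * f by case: (f) h2 => // f' _; rewrite subn1 /= mulSn addnC.
lia.
Qed.

Lemma ar_q2 f q rho j0 : rho <= q -> 1 <= j0 ->
  f * (rho * j0 + (q - rho)) = f * (rho * (j0 - 1)) + q * f.
Proof.
move=> h1 h2; rewrite (mulnC q f) -mulnDr; congr (_ * _).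
case: j0 h2 => // j0 _; rewrite subn1 /= mulnS; lia.
Qed.

Lemma ar_q T u f j j0 n0 q rho : 1 <= T -> T <= f -> f <= Fm T -> 2 * T * (Fm T * Fm T) + 2 <= u ->
  1 <= j <= T -> 1 <= j0 <= T -> n0 = (j - 1) * (u - 1) + j * (f * f) ->
  n0 = q * f + rho -> rho < f -> rho <= q /\ rho * j0 + (q - rho) <= u - 1.
Proof.
move=> hT hf1 hf2 hu /andP [hj1 hj2] /andP [hj01 hj02] hn0 hqr hrho.
have hff : f * f <= Fm T * Fm T by apply: leq_mul.
have hqf : f <= q.
  apply: (ar_q1 (rho := rho)) => //; rewrite -hqr hn0.
  have : 1 * (f * f) <= j * (f * f) by apply: leq_mul.
  set P := (j - 1) * (u - 1); lia.
split; first lia.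
have h3 : f * (rho * (j0 - 1)) <= f * ((f - 1) * (T - 1)) by apply: leq_mul => //; apply: leq_mul; lia.
have h4 : q * f <= (T - 1) * (u - 1) + T * (f * f).
  have : j * (f * f) <= T * (f * f) by apply: leq_mul.
  have : (j - 1) * (u - 1) <= (T - 1) * (u - 1) by apply: leq_mul => //; lia.
  lia.
have h5 : 1 * (u - 1) <= (f - T + 1) * (u - 1) by apply: leq_mul => //; lia.
have h6 : 2 * T * (f * f) <= 2 * T * (Fm T * Fm T) by apply: leq_mul.
suff : f * (rho * j0 + (q - rho)) <= f * (u - 1) by rewrite leq_mul2l; case/orP => //; lia.
rewrite ar_q2 //; last lia.
have e2 : (f - T + 1) * (u - 1) + (T - 1) * (u - 1) = f * (u - 1) by rewrite -mulnDl; congr (_ * _); lia.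
have e3 : f * ((f - 1) * (T - 1)) <= T * (f * f).
  have : (f - 1) * (T - 1) <= f * T by apply: leq_mul; lia.
  move=> h; have := leq_mul (leqnn f) h; rewrite mulnA (mulnC T) mulnA. lia.
lia.
Qed.


Lemma ar_sum a e f j0 q rho U1 n0 cj : rho <= q -> rho * j0 + (q - rho) <= U1 ->
  f + 1 = e * j0 -> n0 = q * f + rho -> cj = U1 + n0 ->
  (rho * j0) * (a * (e + 1)) + (q - rho) * (a * (f + 1)) + (U1 - (rho * j0 + (q - rho))) * a = a * cj.
Proof.
move=> h1 h2 h3 h4 h5.
have [d hd] : exists d, q = rho + d by exists (q - rho); lia.
have [w hw] : exists w, U1 = rho * j0 + (q - rho) + w by exists (U1 - (rho * j0 + (q - rho))); lia.
rewrite hw addKn h5 h4 hw hd addKn.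
have e1 : rho * j0 * (a * (e + 1)) = a * (rho * (e * j0)) + a * (rho * j0) by nia.
rewrite e1 -h3; nia.
Qed.

Lemma ar_n0 j u f : 1 <= j -> j * (u - 1 + f * f) - (u - 1) = (j - 1) * (u - 1) + j * (f * f).
Proof. move=> hj; case: j hj => // j _; rewrite subn1 /=; set P := j * (u - 1); set Q := j * (f * f); nia. Qed.

Lemma ar_c'j j u f : 1 <= j -> u - 1 <= j * (u - 1 + f * f).
Proof. move=> hj; have := leq_mul hj (leqnn (u - 1 + f * f)); lia. Qed.

Lemma pos3 a b c : 0 < a -> 0 < b -> 0 < c -> 0 < a * b * c.
Proof. by move=> ha hb hc; rewrite !muln_gt0 ha hb hc. Qed.

Lemma ustep (ks : seq nat) T u : 0 < size ks -> 1 <= T -> schur_prop ks T ->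
  2 * T * (Fm T * Fm T) + 2 <= u ->
  schur_prop (rcons ks u) (T * T * (u + Fm T * Fm T)).
Proof.
move=> hpos hT1 hT hu D.
suff : sol (T * T * (u + Fm T * Fm T)) D by [].
set N := T * T * (u + Fm T * Fm T).
have FmT : T <= Fm T by rewrite /Fm; have := m3 hT1 (leq_addl T 2) (leqnn T); rewrite !mul1n; lia.
have FmN : Fm T * Fm T <= N.
  rewrite /N; have := leq_mul (leq_mul hT1 hT1) (leq_addl u (Fm T * Fm T)); lia.
have Fm1 : 1 <= Fm T by lia.
have FmN' : Fm T <= N by have := leq_mul Fm1 (leqnn (Fm T)); lia.
have TN : T <= N by lia.
have c0 : 1 * T <= N by rewrite mul1n.
have [[a [ha hDa]]|//] := hit D hpos hT (leqnn 1) c0.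
rewrite mul1n in hDa; move/andP: ha => [ha1 ha2].
have b1 : a * (T + 2) * T <= Fm T by apply: m3.
have c1 : 1 <= a * (T + 2) by rewrite muln_gt0 ha1 addn2.
have c2 : a * (T + 2) * T <= N by lia.
have [[j1 [hj1 hD1]]|//] := hit D hpos hT c1 c2.
have [he1 [he2 he3]] := ar_e hj1.
move/andP: hj1 => [hj11 hj12].
set e := (T + 2) * j1 - 1 in he1 he2 he3.
have b2 : a * e * T <= N.
  have := m3 ha2 he3 (leqnn T).
  have -> : T * ((T + 2) * T) * T = Fm T * T by rewrite /Fm !mulnA.
  have := leq_mul (leqnn (Fm T)) FmT; lia.
have c3 : 1 <= a * e by rewrite muln_gt0 ha1; lia.
have [[j0 [hj0 hD0]]|//] := hit D hpos hT c3 b2.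
have [hf1 [hf2 hf3]] := ar_f hj0 he1 he3.
move/andP: hj0 => [hj01 hj02].
set f := e * j0 - 1 in hf1 hf2 hf3.
set c' := u - 1 + f * f.
have hff : f * f <= Fm T * Fm T by apply: leq_mul.
have hc' : c' <= u + Fm T * Fm T by rewrite /c'; lia.
have b4 : a * c' * T <= N.
  have := m3 ha2 hc' (leqnn T); rewrite /N mulnAC; lia.
have c5 : 1 <= a * c' by rewrite muln_gt0 ha1 /c'; lia.
have [[j [hj hDj]]|//] := hit D hpos hT c5 b4.
have hj' := hj; move/andP: hj' => [hj1' hj2'].
set n0 := j * c' - (u - 1).
have hn0 : n0 = (j - 1) * (u - 1) + j * (f * f) by rewrite /n0 /c' ar_n0.
have [q [rho [hqr hrho]]] : exists q rho, n0 = q * f + rho /\ rho < f.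
  exists (n0 %/ f), (n0 %% f); split; first exact: divn_eq.
  by rewrite ltn_pmod //; apply: leq_trans hf1.
have [hqrho hi12] := ar_q hT1 hf1 hf3 hu hj (introT andP (conj hj01 hj02)) hn0 hqr hrho.
set i1 := rho * j0 in hi12; set i2 := q - rho in hi12.
pose x := fun l => if l < u.-1 then (if l < i1 then a * (T + 2) * j1
           else if l < i1 + i2 then a * e * j0 else a) else a * c' * j.
have hx1 : 1 <= a * (T + 2) * j1 <= N.
  by rewrite pos3 //=; [have := m3 (leqnn a) (leqnn (T + 2)) hj12; lia | rewrite addn2].
have hx2 : 1 <= a * e * j0 <= N.
  rewrite pos3 //=; last lia. have := m3 (leqnn a) (leqnn e) hj02; lia.
have hx3 : 1 <= a * c' * j <= N.
  rewrite pos3 //=; last by rewrite /c'; lia. have := m3 (leqnn a) (leqnn c') hj2'; lia.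
have hx4 : 1 <= a <= N by rewrite ha1 /=; lia.
exists (lastc ks u); exists x; rewrite nth_lastc; split.
  move=> l hl; rewrite /x; case: ifP => hl1.
    case: ifP => _; first by split.
    by case: ifP => _; split.
  by split.
rewrite /x ltnn.
rewrite (eq_bigr (fun l : 'I_u.-1 => if l < i1 then a * (T + 2) * j1
           else if l < i1 + i2 then a * e * j0 else a)); last by move=> l _; rewrite ltn_ord.
rewrite sum3; last exact: leq_addr.
have hi12' : i1 + i2 <= u.-1 by rewrite -subn1.
rewrite (minn_idPl (leq_trans (leq_addr i2 i1) hi12')) (minn_idPl hi12') addKn.
rewrite -(mulnA a (T + 2)) -he2 -(mulnA a e) -hf2 -(mulnA a c').
rewrite -subn1.
apply: ar_sum => //.
by rewrite -hqr /n0 mulnC subnKC //; exact: ar_c'j.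
Qed.


Local Open Scope R_scope.
Lemma real_bound (K d : nat) : exists C : R, Rlt 0 C /\ forall u N : nat, (3 <= u)%N -> (N <= K * u)%N ->
  Rle (INR N) (Rminus (Rdiv (Rmult C (pow (INR u) (d + 1))) (pow (ln (INR u)) d)) 1).
Proof.
exists (INR K + 1); split.
  have := pos_INR K; lra.
move=> u N hu hN.
have hx : (3 <= INR u) by have := le_INR 3 u (elimT leP hu) ; rewrite /=; lra.
have hL : (0 < ln (INR u)) by rewrite -ln_1; apply: ln_increasing; lra.
have hLx : (ln (INR u) < INR u).
  rewrite -{2}[INR u]ln_exp; apply: ln_increasing; first lra.
  have := exp_ineq1 (INR u) ltac:(lra); lra.
have hLd : (0 < ln (INR u) ^ d) by apply: pow_lt.
have hLdx : (ln (INR u) ^ d <= INR u ^ d) by apply: pow_incr; lra.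
have hNK : (INR N <= INR K * INR u) by rewrite -mult_INR; apply: le_INR; apply/leP.
have hK : (0 <= INR K) by apply: pos_INR.
have h1 : (INR N + 1 <= (INR K + 1) * INR u) by nra.
have h2 : ((INR K + 1) * INR u * ln (INR u) ^ d <= (INR K + 1) * INR u ^ (d + 1)).
  rewrite addnC /= Rmult_assoc; apply: Rmult_le_compat_l; first lra.
  rewrite add0n; apply: Rmult_le_compat_l; lra.
have h3 : ((INR N + 1) * ln (INR u) ^ d <= (INR K + 1) * INR u ^ (d + 1)).
  apply: Rle_trans h2; apply: Rmult_le_compat_r; lra.
suff : (INR N + 1 <= (INR K + 1) * INR u ^ (d + 1) / ln (INR u) ^ d) by rewrite /Rminus; lra.
apply: (Rmult_le_reg_r (ln (INR u) ^ d)) => //.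
rewrite /Rdiv Rmult_assoc Rinv_l; lra.
Qed.

Local Close Scope R_scope.


Lemma least (P : nat -> Prop) M : 0 < M -> P M ->
  exists N, 0 < N /\ N <= M /\ P N /\ (forall K, 0 < K -> K < N -> ~ P K).
Proof.
elim/ltn_ind: M => M IH hM hP.
case: (classic (exists K, 0 < K /\ K < M /\ P K)) => [[K [h1 [h2 h3]]]|hn].
  have [N [n1 [n2 [n3 n4]]]] := IH K h2 h1 h3.
  by exists N; do !split => //; apply: leq_trans n2 (ltnW h2).
exists M; split => //; split => //; split => // K h1 h2 h3; apply: hn; by exists K.
Qed.

Lemma main_lin (ks : seq nat) : 0 < size ks -> (forall i, i < size ks -> 2 <= nth 0 ks i) ->
  exists K U, forall u, U <= u -> exists N, is_schur (rcons ks u) N /\ N <= K * u.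
Proof.
move=> hpos hk.
have [T [hT1 hT]] := schur_exists hk.
exists (T * T * (1 + Fm T * Fm T)), (2 * T * (Fm T * Fm T) + 2) => u hu.
have hP := ustep hpos hT1 hT hu.
have hM : 0 < T * T * (u + Fm T * Fm T) by rewrite !muln_gt0 hT1 /=; lia.
have [N [n1 [n2 [n3 n4]]]] := least hM hP.
exists N; split; first by [].
apply: leq_trans n2 _.
set F := Fm T * Fm T.
have h : u + F <= (1 + F) * u.
  have : F <= F * u by rewrite -{1}[F]muln1 leq_mul2l; apply/orP; right; lia.
  rewrite mulnDl mul1n; lia.
by rewrite -[X in _ <= X]mulnA; apply: leq_mul.
Qed.

Theorem corollary2 :
  (forall (r : nat) (k : nat -> nat),
    2 <= r -> (forall i, i < r.-1 -> 3 <= k i) ->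
    exists C : R, Rlt 0 C /\
      exists U : nat, forall u : nat, U <= u ->
        exists N : nat, is_schur (rcons (mkseq k r.-1) u) N /\
          let s := (\sum_(i < r.-1) (k i - 2))%N in
          Rle (INR N)
              (Rminus (Rdiv (Rmult C (pow (INR u) (s + 1))) (pow (ln (INR u)) s)) 1))
  /\
  (forall s t : nat, 3 <= s -> s <= t ->
    exists C : R, Rlt 0 C /\
      exists U : nat, forall u : nat, U <= u ->
        exists N : nat, is_schur [:: s; t; u] N /\
          Rle (INR N)
              (Rminus (Rdiv (Rmult C (pow (INR u) (s + t - 3))) (pow (ln (INR u)) (s + t - 4))) 1)).
Proof.
split.
  move=> r k hr hk.
  have [K [U hKU]] : exists K U, forall u, U <= u -> exists N, is_schur (rcons (mkseq k r.-1) u) N /\ N <= K * u.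
    apply: main_lin; first by rewrite size_mkseq; lia.
    move=> i; rewrite size_mkseq => hi; rewrite nth_mkseq //; have := hk i hi; lia.
  have [C [hC HC]] := real_bound K (\sum_(i < r.-1) (k i - 2)).
  exists C; split => //; exists (maxn U 3) => u hu.
  have [N [hN1 hN2]] := hKU u ltac:(lia).
  exists N; split => //; apply: HC => //; lia.
move=> s t hs hst.
have [K [U hKU]] : exists K U, forall u, U <= u -> exists N, is_schur (rcons [:: s; t] u) N /\ N <= K * u.
  apply: main_lin => //; case=> [|[|i]] //= _; lia.
have [C [hC HC]] := real_bound K (s + t - 4).
exists C; split => //; exists (maxn U 3) => u hu.
have [N [hN1 hN2]] := hKU u ltac:(lia).
exists N; split => //.
rewrite (_ : s + t - 3 = (s + t - 4) + 1); last lia.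
apply: HC => //; lia.
Qed.
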